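(* There exist no positive integers $a,b$ with $1\le a\le b$ such that every nonnegative integer can be written as $ax^2+by^2+5(z^2+zw+w^2)$ with $x,y,z,w\in\mathbb{Z}$. *)

(* Defs.v *)
From Stdlib Require Import ZArith.
Open Scope Z_scope.

Definition qform (a b x y z w : Z) : Z :=
  a * x ^ 2 + b * y ^ 2 + 5 * (z ^ 2 + z * w + w ^ 2).

(* Main.v *)
Require Import Defs.
From Stdlib Require Import ZArith Lia.
Open Scope Z_scope.

Lemma T_nonneg z w : 0 <= z ^ 2 + z * w + w ^ 2.
Proof. nia. Qed.

Lemma T_not2 z w : z ^ 2 + z * w + w ^ 2 <> 2.
Proof.
  intro H.
  assert (Hw : -1 <= w <= 1) by nia.
  assert (Hz : -2 <= z <= 2) by nia.
  assert (w = -1 \/ w = 0 \/ w = 1) as Hw' by lia.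
  assert (z = -2 \/ z = -1 \/ z = 0 \/ z = 1 \/ z = 2) as Hz' by lia.
  destruct Hw' as [Hw'|[Hw'|Hw']]; destruct Hz' as [Hz'|[Hz'|[Hz'|[Hz'|Hz']]]]; subst; rewrite ?Z.pow_2_r in *; lia.
Qed.

Lemma sq_nonneg x : 0 <= x ^ 2.
Proof. nia. Qed.

Lemma sq_pos x : x <> 0 -> 1 <= x ^ 2.
Proof. intros; nia. Qed.

Lemma not_sum_10 x y : x ^ 2 + 2 * y ^ 2 <> 10 /\ x ^ 2 + 2 * y ^ 2 <> 5.
Proof.
  assert (Hy := sq_nonneg y). assert (Hx := sq_nonneg x).
  split; intro H;
  (assert (-3 <= x <= 3) by nia; assert (-2 <= y <= 2) by nia;
   assert (x = -3 \/ x = -2 \/ x = -1 \/ x = 0 \/ x = 1 \/ x = 2 \/ x = 3) as Hx' by lia;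
   assert (y = -2 \/ y = -1 \/ y = 0 \/ y = 1 \/ y = 2) as Hy' by lia;
   destruct Hx' as [?|[?|[?|[?|[?|[?|?]]]]]];
   destruct Hy' as [?|[?|[?|[?|?]]]]; subst; rewrite ?Z.pow_2_r in *; lia).
Qed.

Theorem theorem7p1 :
  ~ exists a b : Z, 1 <= a /\ a <= b /\
      forall n : Z, 0 <= n ->
        exists x y z w : Z, n = qform a b x y z w.
Proof.
  intros [a [b [Ha [Hab H]]]].
  assert (Ha1 : a = 1).
  { destruct (H 1 ltac:(lia)) as [x [y [z [w E]]]]. unfold qform in E.
    pose proof (T_nonneg z w). pose proof (sq_nonneg x). pose proof (sq_nonneg y).
    assert (0 <= a * x ^ 2) by (apply Z.mul_nonneg_nonneg; lia).
    assert (0 <= b * y ^ 2) by (apply Z.mul_nonneg_nonneg; lia).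
    destruct (Z.eq_dec x 0) as [Hx0|Hx].
    - subst x. destruct (Z.eq_dec y 0) as [Hy0|Hy].
      + subst y. rewrite (Z.pow_2_r 0) in *. lia.
      + pose proof (sq_pos y Hy).
        assert (b * 1 <= b * y ^ 2) by (apply Z.mul_le_mono_nonneg_l; lia). lia.
    - pose proof (sq_pos x Hx).
      assert (a * 1 <= a * x ^ 2) by (apply Z.mul_le_mono_nonneg_l; lia). lia. }
  subst a.
  destruct (H 2 ltac:(lia)) as [x [y [z [w E]]]]. unfold qform in E.
  pose proof (T_nonneg z w). pose proof (sq_nonneg x). pose proof (sq_nonneg y).
  assert (HT : z ^ 2 + z * w + w ^ 2 = 0) by nia.
  rewrite HT in E.
  assert (Hb : b = 1 \/ b = 2).
  { destruct (Z.eq_dec y 0) as [Hy0|Hy]; [subst y|pose proof (sq_pos y Hy)].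
    - assert (-1 <= x <= 1) by nia.
      assert (x = -1 \/ x = 0 \/ x = 1) as [?|[?|?]] by lia; subst; rewrite ?Z.pow_2_r in *; lia.
    - nia. }
  clear x y z w E HT H0 H1 H2.
  destruct Hb as [?|?]; subst b.
  - destruct (H 3 ltac:(lia)) as [x [y [z [w E]]]]. unfold qform in E.
    pose proof (T_nonneg z w). pose proof (sq_nonneg x). pose proof (sq_nonneg y).
    assert (HT : z ^ 2 + z * w + w ^ 2 = 0) by nia.
    rewrite HT in E.
    assert (-1 <= x <= 1) by nia. assert (-1 <= y <= 1) by nia.
    assert (x = -1 \/ x = 0 \/ x = 1) as [?|[?|?]] by lia;
    assert (y = -1 \/ y = 0 \/ y = 1) as [?|[?|?]] by lia; subst; rewrite ?Z.pow_2_r in *; lia.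
  - destruct (H 10 ltac:(lia)) as [x [y [z [w E]]]]. unfold qform in E.
    pose proof (T_nonneg z w). pose proof (sq_nonneg x). pose proof (sq_nonneg y).
    pose proof (T_not2 z w). pose proof (not_sum_10 x y).
    assert (z ^ 2 + z * w + w ^ 2 = 0 \/ z ^ 2 + z * w + w ^ 2 = 1) as [HT|HT] by lia;
    rewrite HT in E; lia.
Qed.
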